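(* Let $\mathcal M$ be a finite polyptych lattice over $F$, $(\mathcal M,\mathcal N,\mathsf v,\mathsf w)$ a strict dual $F$-pair, and $\mathcal P\subseteq\mathcal M_{\mathbb R}$ a PL polytope over $F$. Then the support function satisfies $\psi_{\mathcal P}(n)=\min_{s\in V(\mathcal P)}\mathsf v(s)(n)$ for all $n\in\mathcal N_{\mathbb R}$, where $V(\mathcal P)$ is a finite set. In particular $\psi_{\mathcal P}$ is continuous and belongs to the point semialgebra $P_{\mathcal N_{\mathbb R}}$.
   Context: Fix a subring $F$ with $\mathbb Z\subseteq F\subseteq\mathbb R$. A polyptych lattice of rank $r$ over $F$ is a collection $\{M_\alpha\}_{\alpha\in I}$ of free $F$-modules of rank $r$ with piecewise $F$-linear maps (continuous and $F$-linear on each cone of some complete $F$-rational fan) $\mu_{\alpha,\beta}:M_\alpha\to M_\beta$ with $\mu_{\alpha,\alpha}=\mathrm{id}$, $\mu_{\alpha,\beta}=\mu_{\beta,\alpha}^{-1}$, $\mu_{\beta,\gamma}\circ\mu_{\alpha,\beta}=\mu_{\alpha,\gamma}$; finite if $I$ is finite. Elements are classes of $\bigsqcup M_\alpha$ under $m_\alpha\sim\mu_{\alpha,\beta}(m_\alpha)$; $\pi_\alpha$ chart maps; $\mathcal M_{\mathbb R}$ has charts $M_\alpha\otimes\mathbb R$. $m+_\alpha m':=\pi_\alpha^{-1}(\pi_\alpha(m)+\pi_\alpha(m'))$, $\lambda m:=\pi_\alpha^{-1}(\lambda\pi_\alpha(m))$. $\Sigma(\mathcal M)$: coarsest complete fan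 of cones in $\mathcal M_{\mathbb R}$ on whose chart images all mutations are linear. Points of $\mathcal M$ (resp. $\mathcal M_{\mathbb R}$): $p$ with $p(m)+p(m')=\min_\alpha p(m+_\alpha m')$ and $p(\lambda m)=\lambda p(m)$ for nonnegative scalars; sets $\mathrm{Sp}(\mathcal M)$, $\mathrm{Sp}_{\mathbb R}(\mathcal M)$; $\mathrm{Sp}_{\mathbb R}(\mathcal M,\alpha)$ = those linear on chart $\alpha$. $\mathcal H_{p,a}=\{m\in\mathcal M_{\mathbb R}:p(m)\ge a\}$. A PL polytope over $F$: compact $\bigcap_{i=1}^\ell\mathcal H_{p_i,a_i}$, $p_i\in\mathrm{Sp}(\mathcal M)$, $a_i\in F$; $V(\mathcal P)=\{m:\exists\alpha,\ \pi_\alpha(m)\text{ a vertex of the polytope }\pi_\alpha(\mathcal P)\}$. Strict dual $F$-pair: $\mathsf v:\mathcal M_{\mathbb R}\to\mathrm{Sp}_{\mathbb R}(\mathcal N)$, $\mathsf w:\mathcal N_{\mathbb R}\to\mathrm{Sp}_{\mathbb R}(\mathcal M)$ such that (1) $\mathsf v(\mathcal M)\subseteq\mathrm{Sp}(\mathcal N)$, $\mathsf w(\mathcal N)\subseteq\mathrm{Sp}(\mathcal M)$; (2) $\mathsf v(m)(n)=\mathsf w(n)(m)$; (3) these restrictions are bijections; (4) the $\mathsf v^{-1}(\mathrm{Sp}_{\mathbb R}(\mathcal N,\gamma))$ are exactly the maximal cones of $\Sigma(\mathcal M)$ and the $\mathsf w^{-1}(\mathrm{Sp}_{\mathbb R}(\mathcal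 M,\alpha))$ those of $\Sigma(\mathcal N)$. Support function: $\psi_{\mathcal P}(n)=\min\{\mathsf v(u)(n):u\in\mathcal P\}$ for $n\in\mathcal N_{\mathbb R}$. $P_{\mathcal N_{\mathbb R}}$ is the set of functions on $\mathcal N_{\mathbb R}$ generated by $\mathrm{Sp}_{\mathbb R}(\mathcal N)$ under pointwise $\min$ and $+$. *)

(* Defs.v *)
From HB Require Import structures.
From mathcomp Require Import all_boot all_order all_algebra.
From mathcomp Require Import all_classical all_reals all_analysis.
From mathcomp Require Import Rstruct Rstruct_topology.
From Stdlib Require List.
Set Implicit Arguments. Unset Strict Implicit. Unset Printing Implicit Defensive.
Import Order.TTheory GRing.Theory Num.Theory.
Local Open Scope classical_set_scope.
Local Open Scope ring_scope.

Notation RR := Rdefinitions.R.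

Definition subringR (F : set RR) : Prop :=
  (forall z : int, F (z%:~R)) /\
  (forall x y, F x -> F y -> F (x + y) /\ F (x * y) /\ F (- x)).

Definition inFv (F : set RR) (r : nat) (x : 'rV[RR]_r) : Prop := forall i, F (x 0 i).
Definition inFm (F : set RR) (r s : nat) (A : 'M[RR]_(r, s)) : Prop :=
  forall i j, F (A i j).

Definition dotv (r : nat) (u x : 'rV[RR]_r) : RR := \sum_(i < r) u 0 i * x 0 i.

Definition cone_gen (r : nat) (gs : seq 'rV[RR]_r) (x : 'rV[RR]_r) : Prop :=
  exists lam : 'I_(size gs) -> RR,
    (forall i, 0 <= lam i) /\ x = \sum_(i < size gs) lam i *: nth 0 gs i.

Definition rcone (F : set RR) (r : nat) (C : set 'rV[RR]_r) : Prop :=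
  exists gs : seq 'rV[RR]_r, (forall g, List.In g gs -> inFv F g) /\
    (forall x, C x <-> cone_gen gs x).

Definition eqset (T : Type) (A B : set T) : Prop := forall x, A x <-> B x.

Definition is_face (r : nat) (C D : set 'rV[RR]_r) : Prop :=
  exists u : 'rV[RR]_r, (forall x, C x -> 0 <= dotv u x) /\
    (forall x, D x <-> (C x /\ dotv u x = 0)).

Definition fan (F : set RR) (r : nat) (L : seq (set 'rV[RR]_r)) : Prop :=
  (forall C, List.In C L -> rcone F C) /\
  (forall C D, List.In C L -> is_face C D -> exists D', List.In D' L /\ eqset D D') /\
  (forall C C', List.In C L -> List.In C' L ->
     is_face C (C `&` C') /\ is_face C' (C `&` C')).

Definition complete_fan (F : set RR) (r : nat) (L : seq (set 'rV[RR]_r)) : Prop :=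
  fan F L /\ (forall x, exists C, List.In C L /\ C x).

Definition pwl (F : set RR) (r s : nat) (f : 'rV[RR]_r -> 'rV[RR]_s) : Prop :=
  continuous f /\
  exists L, complete_fan F L /\
    forall C, List.In C L -> exists A : 'M[RR]_(r, s), inFm F A /\
      forall x, C x -> f x = x *m A.

(* A polyptych lattice of rank r over F with index type I: the charts are
   M_alpha = F^r (inside M_alpha ⊗ R = R^r) and mu a b is the (real extension
   of the) mutation mu_{a,b}. *)
Definition polyptych (F : set RR) (I : Type) (r : nat)
    (mu : I -> I -> 'rV[RR]_r -> 'rV[RR]_r) : Prop :=
  inhabited I /\
  (forall a b, pwl F (mu a b)) /\
  (forall a x, mu a a x = x) /\
  (forall a b x, mu b a (mu a b x) = x /\ mu a b (mu b a x) = x) /\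
  (forall a b c x, mu b c (mu a b x) = mu a c x).

Section PL.
Variables (F : set RR) (I : Type) (r : nat) (mu : I -> I -> 'rV[RR]_r -> 'rV[RR]_r).

(* elements of M_R: compatible families of chart coordinates *)
Definition isMR (m : I -> 'rV[RR]_r) : Prop := forall a b, m b = mu a b (m a).
(* elements of M: classes of elements of some M_alpha = F^r *)
Definition isM (m : I -> 'rV[RR]_r) : Prop := isMR m /\ exists a, inFv F (m a).
Definition piinv (a : I) (x : 'rV[RR]_r) : I -> 'rV[RR]_r := fun b => mu a b x.
Definition addc (a : I) (m m' : I -> 'rV[RR]_r) := piinv a (m a + m' a).
Definition smulc (a : I) (l : RR) (m : I -> 'rV[RR]_r) := piinv a (l *: m a).

Definition SpR (p : (I -> 'rV[RR]_r) -> RR) : Prop :=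
  (forall m m', isMR m -> isMR m' ->
     (forall a, p m + p m' <= p (addc a m m')) /\
     (exists a, p m + p m' = p (addc a m m'))) /\
  (forall a l m, 0 <= l -> isMR m -> p (smulc a l m) = l * p m).
Definition Sp (p : (I -> 'rV[RR]_r) -> RR) : Prop :=
  SpR p /\ forall m, isM m -> F (p m).
Definition SpRa (a : I) (p : (I -> 'rV[RR]_r) -> RR) : Prop :=
  SpR p /\ exists u : 'rV[RR]_r, forall x, p (piinv a x) = dotv u x.

Definition subM (A B : set (I -> 'rV[RR]_r)) := forall m, isMR m -> A m -> B m.
Definition eqM (A B : set (I -> 'rV[RR]_r)) := subM A B /\ subM B A.

Definition chart_fan (S : seq (set (I -> 'rV[RR]_r))) : Prop :=
  (forall a, complete_fan F (map (fun C => fun x => C (piinv a x)) S)) /\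
  (forall C a b, List.In C S -> exists A : 'M[RR]_(r, r),
      forall x, C (piinv a x) -> mu a b x = x *m A).
Definition coarsest_fan (S : seq (set (I -> 'rV[RR]_r))) : Prop :=
  chart_fan S /\ forall S', chart_fan S' ->
    forall C', List.In C' S' -> exists C, List.In C S /\ subM C' C.
Definition maxcone (S : seq (set (I -> 'rV[RR]_r))) (C : set (I -> 'rV[RR]_r)) :=
  List.In C S /\ forall C', List.In C' S -> subM C C' -> subM C' C.

Definition PLpolytope (P : set (I -> 'rV[RR]_r)) : Prop :=
  (exists (l : nat) (p : 'I_l -> (I -> 'rV[RR]_r) -> RR) (c : 'I_l -> RR),
     (forall i, Sp (p i)) /\ (forall i, F (c i)) /\
     (forall m, P m <-> (isMR m /\ forall i, c i <= p i m))) /\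
  (forall a, compact [set x | P (piinv a x)]).

Definition vertex (K : set 'rV[RR]_r) (x : 'rV[RR]_r) : Prop :=
  K x /\ exists u : 'rV[RR]_r, forall y, K y -> y <> x -> dotv u x < dotv u y.

Definition Vert (P : set (I -> 'rV[RR]_r)) (m : I -> 'rV[RR]_r) : Prop :=
  P m /\ exists a, vertex [set x | P (piinv a x)] (m a).

End PL.

Definition strict_dual_pair (F : set RR) (I J : Type) (r s : nat)
    (mu : I -> I -> 'rV[RR]_r -> 'rV[RR]_r) (nu : J -> J -> 'rV[RR]_s -> 'rV[RR]_s)
    (v : (I -> 'rV[RR]_r) -> (J -> 'rV[RR]_s) -> RR)
    (w : (J -> 'rV[RR]_s) -> (I -> 'rV[RR]_r) -> RR) : Prop :=
  (forall m, isMR mu m -> SpR nu (v m)) /\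
  (forall n, isMR nu n -> SpR mu (w n)) /\
  (forall m, isM F mu m -> Sp F nu (v m)) /\
  (forall n, isM F nu n -> Sp F mu (w n)) /\
  (forall m n, isMR mu m -> isMR nu n -> v m n = w n m) /\
  (forall m m', isM F mu m -> isM F mu m' ->
     (forall n, isMR nu n -> v m n = v m' n) -> m = m') /\
  (forall p, Sp F nu p -> exists m, isM F mu m /\ forall n, isMR nu n -> v m n = p n) /\
  (forall n n', isM F nu n -> isM F nu n' ->
     (forall m, isMR mu m -> w n m = w n' m) -> n = n') /\
  (forall p, Sp F mu p -> exists n, isM F nu n /\ forall m, isMR mu m -> w n m = p m) /\
  (exists S, coarsest_fan F mu S /\
     (forall g, exists C, maxcone mu S C /\
        eqM mu (fun m => SpRa nu g (v m)) C) /\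
     (forall C, maxcone mu S C -> exists g,
        eqM mu C (fun m => SpRa nu g (v m)))) /\
  (exists S, coarsest_fan F nu S /\
     (forall a, exists C, maxcone nu S C /\
        eqM nu (fun n => SpRa mu a (w n)) C) /\
     (forall C, maxcone nu S C -> exists a,
        eqM nu C (fun n => SpRa mu a (w n)))).

(* support function psi_P(n) = min { v(u)(n) : u in P } (as an infimum) *)
Definition psiP (I J : Type) (r s : nat)
    (v : (I -> 'rV[RR]_r) -> (J -> 'rV[RR]_s) -> RR)
    (P : set (I -> 'rV[RR]_r)) (n : J -> 'rV[RR]_s) : RR :=
  inf [set v u n | u in P].

Definition is_min (S : set RR) (y : RR) : Prop := S y /\ forall z, S z -> y <= z.

Inductive inPN (J : Type) (s : nat) (nu : J -> J -> 'rV[RR]_s -> 'rV[RR]_s)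
  : ((J -> 'rV[RR]_s) -> RR) -> Prop :=
| PN_pt p : SpR nu p -> inPN nu p
| PN_min f g : inPN nu f -> inPN nu g -> inPN nu (fun n => Num.min (f n) (g n))
| PN_add f g : inPN nu f -> inPN nu g -> inPN nu (fun n => f n + g n).

(* Main.v *)
Require Import Defs.
From HB Require Import structures.
From mathcomp Require Import all_boot all_order all_algebra.
From mathcomp Require Import all_classical all_reals all_analysis.
From mathcomp Require Import Rstruct Rstruct_topology.
From Stdlib Require List.
From mathcomp Require Import ring lra.
Set Implicit Arguments. Unset Strict Implicit. Unset Printing Implicit Defensive.
Import Order.TTheory GRing.Theory Num.Theory.
Local Open Scope classical_set_scope.
Local Open Scope ring_scope.

Section Dot.
Variable r : nat.
Implicit Types u x y : 'rV[RR]_r.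

Lemma dotvDl u u' x : dotv (u + u') x = dotv u x + dotv u' x.
Proof. by rewrite /dotv -big_split; apply: eq_bigr => i _; rewrite mxE mulrDl. Qed.
Lemma dotvDr u x y : dotv u (x + y) = dotv u x + dotv u y.
Proof. by rewrite /dotv -big_split; apply: eq_bigr => i _; rewrite mxE mulrDr. Qed.
Lemma dotvZl a u x : dotv (a *: u) x = a * dotv u x.
Proof. by rewrite /dotv mulr_sumr; apply: eq_bigr => i _; rewrite mxE mulrA. Qed.
Lemma dotvZr a u x : dotv u (a *: x) = a * dotv u x.
Proof. by rewrite /dotv mulr_sumr; apply: eq_bigr => i _; rewrite mxE mulrCA. Qed.
Lemma dotvNr u x : dotv u (- x) = - dotv u x.
Proof. by rewrite -scaleN1r dotvZr mulN1r. Qed.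
Lemma dotvNl u x : dotv (- u) x = - dotv u x.
Proof. by rewrite -scaleN1r dotvZl mulN1r. Qed.
Lemma dotvBr u x y : dotv u (x - y) = dotv u x - dotv u y.
Proof. by rewrite dotvDr dotvNr. Qed.
Lemma dotv0l x : dotv 0 x = 0.
Proof. by rewrite /dotv big1 // => i _; rewrite mxE mul0r. Qed.
Lemma dotv0r u : dotv u 0 = 0.
Proof. by rewrite /dotv big1 // => i _; rewrite mxE mulr0. Qed.
Lemma dotvC u x : dotv u x = dotv x u.
Proof. by rewrite /dotv; apply: eq_bigr => i _; rewrite mulrC. Qed.
Lemma dotv_suml (T : Type) (s : seq T) (P : pred T) (f : T -> 'rV[RR]_r) x :
  dotv (\sum_(c <- s | P c) f c) x = \sum_(c <- s | P c) dotv (f c) x.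
Proof.
elim: s => [|a s IH]; first by rewrite !big_nil dotv0l.
rewrite !big_cons; case: (P a) => //; by rewrite dotvDl IH.
Qed.
Lemma dotv_ge0 u : 0 <= dotv u u.
Proof. by rewrite /dotv; apply: sumr_ge0 => i _; rewrite -expr2 sqr_ge0. Qed.
Lemma dotv_eq0 u : dotv u u = 0 -> u = 0.
Proof.
move=> H; apply/matrixP => i j; rewrite mxE (ord1 i).
have := H; rewrite /dotv => /eqP; rewrite psumr_eq0; last first.
  by move=> k _; rewrite -expr2 sqr_ge0.
move=> /allP /(_ j (mem_index_enum _)) /=; rewrite mulf_eq0 orbb => /eqP //.
Qed.
Lemma dotv_mul u x (A : 'M[RR]_(r, r)) : dotv u (x *m A) = dotv (u *m A^T) x.
Proof.
rewrite /dotv; under eq_bigr do rewrite mxE mulr_sumr.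
rewrite exchange_big /=; apply: eq_bigr => i _; rewrite mxE mulr_suml.
by apply: eq_bigr => j _; rewrite mxE; ring.
Qed.
End Dot.

Lemma In_map_iff (T U : Type) (f : T -> U) (s : seq T) y :
  List.In y (map f s) <-> exists x, f x = y /\ List.In x s.
Proof.
elim: s y => [|a s IH] y /=; first by split => // [[x []]].
split.
  move=> [<-|/IH [x [H1 H2]]]; first by exists a; split => //; left.
  by exists x; split => //; right.
move=> [x [<- [->|Hx]]]; first by left.
by right; apply/IH; exists x.
Qed.
Lemma In_map (T U : Type) (f : T -> U) (s : seq T) x :
  List.In x s -> List.In (f x) (map f s).
Proof. by move=> H; apply/In_map_iff; exists x. Qed.
Lemma posmin (xs : seq RR) : (forall x, List.In x xs -> 0 < x) ->
  exists e, 0 < e /\ forall x, List.In x xs -> e <= x.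
Proof.
elim: xs => [|a s IH] H; first by exists 1; split => //.
have [e [e0 He]] : exists e, 0 < e /\ forall x, List.In x s -> e <= x.
  by apply: IH => x Hx; apply: H; right.
have a0 : 0 < a by apply: H; left.
exists (Num.min e a); split; first by rewrite lt_min e0 a0.
move=> x [<-|Hx]; first by rewrite ge_min lexx orbT.
by rewrite ge_min He.
Qed.

Lemma avoid_vals (B : seq RR) d : 0 < d ->
  exists t, 0 < t /\ t < d /\ forall b, List.In b B -> t <> b.
Proof.
move=> d0.
have Hpos : forall x, List.In x (map (fun b => if 0 < b then b else d) (d :: B)) -> 0 < x.
  move=> x Hx; have [b [<- _]] := proj1 (In_map_iff _ _ _) Hx; by case: ifP.
have [e [e0 He]] := posmin Hpos.
have ed : e <= d by have := He d (or_introl _); rewrite d0; apply.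
exists (e / 2); split; first by lra.
split; first by lra.
move=> b Hb Eb.
have H := He (if 0 < b then b else d) (@In_map _ _ (fun b => if 0 < b then b else d) (d :: B) b (or_intror Hb)).
move: H; case: ifP => Hb0 H; first lra.
move: Hb0 => /negbT; rewrite -leNgt; lra.
Qed.

Lemma list_argmin (T : Type) (s : seq T) (f : T -> RR) :
  s <> [::] -> exists c, List.In c s /\ forall c', List.In c' s -> f c <= f c'.
Proof.
elim: s => [//|a s IH] _.
case: s IH => [|b s] IH.
  by exists a; split; [left|move=> c' [<-|[]]].
have [c [Hc Hm]] := IH (fun H => match H with end).
case: (leP (f a) (f c)) => H.
  exists a; split; first by left.
  move=> c' [<-|Hc']; first by [].
  exact: le_trans H (Hm _ Hc').
exists c; split; first by right.
move=> c' [<-|Hc']; first exact: ltW.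
exact: Hm.
Qed.

Lemma list_choice (T U : Type) (L : seq T) (Q : T -> U -> Prop) :
  (forall C, List.In C L -> exists q, Q C q) ->
  exists Qs : seq U, (forall C, List.In C L -> exists q, List.In q Qs /\ Q C q) /\
    (forall q, List.In q Qs -> exists C, List.In C L /\ Q C q).
Proof.
elim: L => [|a L IH] H.
  by exists [::]; split => // C [].
have [q Hq] := H a (or_introl erefl).
have [Qs [H1 H2]] := IH (fun C HC => H C (or_intror HC)).
exists (q :: Qs); split.
  move=> C [<-|HC]; first by exists q; split => //; left.
  by have [q' [Hq' HQ]] := H1 C HC; exists q'; split => //; right.
move=> q' [<-|Hq']; first by exists a; split => //; left.
by have [C [HC HQ]] := H2 q' Hq'; exists C; split => //; right.
Qed.

Lemma In_mem (T : eqType) (x : T) s : List.In x s <-> x \in s.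
Proof.
elim: s => [|a s IH] //=; rewrite inE; split.
  by move=> [->|/IH ->]; rewrite ?eqxx ?orbT.
by move=> /orP [/eqP ->|/IH]; [left|right].
Qed.

Lemma finite_of_inj (T : Type) (U : finType) (A : set T) (f : T -> U) :
  (forall x y, A x -> A y -> f x = f y -> x = y) ->
  exists l, forall x, A x <-> List.In x l.
Proof.
move=> inj.
pose g (u : U) : option T := match pselect (exists x, A x /\ f x = u) with
  | left H => Some (proj1_sig (cid H)) | right _ => None end.
have gP : forall u x, g u = Some x -> A x /\ f x = u.
  move=> u x; rewrite /g; case: pselect => // H [<-].
  exact: (proj2_sig (cid H)).
have pmapP : forall s x, List.In x (pmap g s) <-> exists u, List.In u s /\ g u = Some x.
  elim=> [|u s IH] x /=; first by split => // [[u []]].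
  case E: (g u) => [y|] /=; split.
  - move=> [<-|/IH [u' [H1 H2]]]; first by exists u; split => //; left.
    by exists u'; split => //; right.
  - move=> [u' [[<-|Hu] Hg]]; first by left; rewrite E in Hg; case: Hg.
    by right; apply/IH; exists u'.
  - by move=> /IH [u' [H1 H2]]; exists u'; split => //; right.
  - move=> [u' [[<-|Hu] Hg]]; first by rewrite E in Hg.
    by apply/IH; exists u'.
exists (pmap g (enum U)) => x; split.
  move=> Ax; apply/pmapP; exists (f x); split; first by apply/In_mem; rewrite mem_enum.
  rewrite /g; case: pselect => [H|]; last by move=> H; exfalso; apply: H; exists x.
  congr Some; have [H1 H2] := proj2_sig (cid H); exact: inj.
by move=> /pmapP [u [_ /gP []]].
Qed.

Lemma sum_le (T : Type) (s : seq T) (P : pred T) (f g : T -> RR) :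
  (forall c, List.In c s -> P c -> f c <= g c) ->
  \sum_(c <- s | P c) f c <= \sum_(c <- s | P c) g c.
Proof.
elim: s => [|a s IH] H; first by rewrite !big_nil.
rewrite !big_cons; case: ifP => Pa.
  apply: lerD; first by apply: H => //; left.
  by apply: IH => c Hc; apply: H; right.
by apply: IH => c Hc; apply: H; right.
Qed.

Lemma sum_lt (T : Type) (s : seq T) (P : pred T) (f g : T -> RR) :
  (forall c, List.In c s -> P c -> f c <= g c) ->
  (exists c, List.In c s /\ P c /\ f c < g c) ->
  \sum_(c <- s | P c) f c < \sum_(c <- s | P c) g c.
Proof.
elim: s => [|a s IH] H [c0 [Hc0 [P0 L0]]]; first by case: Hc0.
rewrite !big_cons.
case: Hc0 => [E|Hc0].
  subst a; rewrite P0; apply: ltr_leD => //.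
  by apply: sum_le => c Hc; apply: H; right.
have IH' : \sum_(c <- s | P c) f c < \sum_(c <- s | P c) g c.
  by apply: IH; [move=> c Hc; apply: H; right|exists c0].
case: ifP => Pa //; apply: ler_ltD => //; by apply: H => //; left.
Qed.

Lemma count_le (T : Type) (s : seq T) (a1 a2 : pred T) :
  (forall c, List.In c s -> a1 c -> a2 c) -> (count a1 s <= count a2 s)%N.
Proof.
elim: s => [|a s IH] H //=.
have IH' := IH (fun c Hc => H c (or_intror Hc)).
case E1: (a1 a); first by rewrite (H a (or_introl erefl) E1) /= !add1n ltnS.
by rewrite add0n; apply: leq_trans IH' _; apply: leq_addl.
Qed.

Lemma count_lt (T : Type) (s : seq T) (a1 a2 : pred T) :
  (forall c, List.In c s -> a1 c -> a2 c) ->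
  (exists c, List.In c s /\ a2 c /\ ~~ a1 c) ->
  (count a1 s < count a2 s)%N.
Proof.
elim: s => [|a s IH] H [c0 [Hc0 [A2 A1]]]; first by case: Hc0.
have Hle : (count a1 s <= count a2 s)%N.
  by apply: count_le => c Hc; apply: H; right.
rewrite /=; case: Hc0 => [E|Hc0].
  subst a; rewrite A2 (negbTE A1) /=; by rewrite add0n add1n ltnS.
have IH' : (count a1 s < count a2 s)%N.
  by apply: IH; [move=> c Hc; apply: H; right|exists c0].
case E1: (a1 a).
  by rewrite (H a (or_introl erefl) E1) /= !add1n ltnS.
by rewrite /= add0n; apply: leq_trans IH' _; apply: leq_addl.
Qed.

Lemma map_eq_In (T U : Type) (f g : T -> U) (s : seq T) c :
  map f s = map g s -> List.In c s -> f c = g c.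
Proof.
elim: s => [|a s IH] //= [E1 E2] [<-|Hc] //; exact: IH.
Qed.

Lemma dotv_cont r (u : 'rV[RR]_r) : continuous (dotv u).
Proof.
rewrite /dotv.
suff H : forall s : seq 'I_r, continuous (fun x : 'rV[RR]_r => \sum_(i <- s) u 0 i * x 0 i).
  exact: H.
elim=> [|a s IH].
  under eq_fun do rewrite big_nil; exact: cst_continuous.
under eq_fun do rewrite big_cons.
move=> x.
have H1 : continuous (fun x : 'rV[RR]_r => u 0 a * x 0 a).
  move=> y; apply: continuousM; first exact: cst_continuous.
  exact: coord_continuous.
exact: (@continuousD RR RR^o _ _ _ x (H1 x) (IH x)).
Qed.

Section Hpoly.
Variable r : nat.
Variable cs : seq ('rV[RR]_r * RR).
Definition inK : set 'rV[RR]_r := fun y => forall c, List.In c cs -> c.2 <= dotv c.1 y.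

Lemma step x d : inK x -> (forall c, List.In c cs -> dotv c.1 x = c.2 -> dotv c.1 d = 0) ->
  exists e, 0 < e /\ forall t, `|t| <= e -> inK (x + t *: d).
Proof.
move=> Kx Hd.
pose f := fun c : 'rV[RR]_r * RR => if dotv c.1 x == c.2 then 1
   else (dotv c.1 x - c.2) / (`|dotv c.1 d| + 1).
have Hpos : forall z, List.In z (map f cs) -> 0 < z.
  move=> z /In_map_iff [c [<- Hc]]; rewrite /f; case: eqP => // E.
  apply: divr_gt0; last by rewrite ltr_wpDl.
  have := Kx c Hc; rewrite subr_gt0 le_eqVlt => /orP [/eqP E'|//].
  by exfalso; apply: E.
have [e [e0 He]] := posmin Hpos.
exists e; split => // t Ht c Hc; rewrite dotvDr dotvZr.
case: (eqVneq (dotv c.1 x) c.2) => E.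
  by rewrite (Hd c Hc E) mulr0 addr0 E.
have := He (f c) (In_map _ Hc); rewrite /f (negbTE E).
rewrite ler_pdivlMr; last by rewrite ltr_wpDl.
move=> H1.
have H2 : `|t * dotv c.1 d| <= e * `|dotv c.1 d|.
  by rewrite normrM; apply: ler_wpM2r.
have H3 := ler_norm (- (t * dotv c.1 d)); rewrite normrN in H3.
have H4 : 0 <= `|dotv c.1 d| by [].
nra.
Qed.

Lemma vertex_ker x d : vertex inK x ->
  (forall c, List.In c cs -> dotv c.1 x = c.2 -> dotv c.1 d = 0) -> d = 0.
Proof.
move=> [Kx [u Hu]] Hd.
have [e [e0 He]] := step Kx Hd.
case: (eqVneq d 0) => // dn0; exfalso.
have neq : forall t, t != 0 -> x + t *: d <> x.
  move=> t tn0 /(congr1 (fun z => z - x)); rewrite addrC addKr subrr => /eqP.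
  by rewrite scaler_eq0 (negbTE tn0) (negbTE dn0).
have a1 : `|e| <= e by rewrite ger0_norm // ltW.
have a2 : `|- e| <= e by rewrite normrN ger0_norm // ltW.
have n1 : e != 0 by rewrite gt_eqF.
have n2 : - e != 0 by rewrite oppr_eq0 gt_eqF.
have h1 := Hu (x + e *: d) (He e a1) (neq e n1).
have h2 := Hu (x + (- e) *: d) (He (- e) a2) (neq (- e) n2).
rewrite !dotvDr !dotvZr in h1 h2.
lra.
Qed.

Lemma ker_vertex x : inK x ->
  (forall d, (forall c, List.In c cs -> dotv c.1 x = c.2 -> dotv c.1 d = 0) -> d = 0) ->
  vertex inK x.
Proof.
move=> Kx Hker; split => //.
exists (\sum_(c <- cs | dotv c.1 x == c.2) c.1) => y Ky nyx.
rewrite !dotv_suml.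
have [c0 [Hc0 [A0 N0]]] : exists c0, List.In c0 cs /\ dotv c0.1 x = c0.2 /\
    dotv c0.1 (y - x) <> 0.
  case: (pselect (exists c0, List.In c0 cs /\ dotv c0.1 x = c0.2 /\
    dotv c0.1 (y - x) <> 0)) => // Hn; exfalso; apply: nyx.
  have : y - x = 0.
    apply: Hker => c Hc Ac.
    case: (pselect (dotv c.1 (y - x) = 0)) => // Hne; exfalso; apply: Hn.
    by exists c.
  by move/eqP; rewrite subr_eq0 => /eqP.
apply: sum_lt.
  move=> c Hc /eqP E; rewrite E; exact: Ky.
exists c0; split => //; split; first by apply/eqP.
rewrite dotvBr in N0; have := Ky c0 Hc0; rewrite -A0.
rewrite le_eqVlt => /orP [/eqP E|//]; exfalso; apply: N0; rewrite E subrr //.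
Qed.

Definition actv x : (size cs).-tuple bool :=
  map_tuple (fun c => dotv c.1 x == c.2) (in_tuple cs).

Lemma Hpoly_finite : exists l, forall x, vertex inK x <-> List.In x l.
Proof.
apply: (@finite_of_inj _ _ _ actv) => x y Vx Vy E.
have E' : map (fun c => dotv c.1 x == c.2) cs = map (fun c => dotv c.1 y == c.2) cs.
  by have := congr1 val E.
have : y - x = 0.
  apply: (vertex_ker Vx) => c Hc Ac.
  have := map_eq_In E' Hc; rewrite Ac eqxx => /esym /eqP Ay.
  by rewrite dotvBr Ay Ac subrr.
by move/eqP; rewrite subr_eq0 => /eqP.
Qed.
End Hpoly.

Lemma In_filter (T : Type) (p : pred T) (s : seq T) c :
  List.In c (seq.filter p s) <-> List.In c s /\ p c.
Proof.
elim: s => [|a s IH] /=; first by split => // [[]].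
case: ifP => pa /=; split.
- by move=> [<-|/IH [H1 H2]]; [split => //; left|split => //; right].
- by move=> [[<-|Hc] pc]; [left|right; apply/IH].
- by move=> /IH [H1 H2]; split => //; right.
- by move=> [[E|Hc] pc]; [subst a; rewrite pc in pa|apply/IH].
Qed.

Lemma compact_min r (K : set 'rV[RR]_r) (f : 'rV[RR]_r -> RR) :
  compact K -> continuous f -> (exists x, K x) ->
  exists x, K x /\ forall y, K y -> f x <= f y.
Proof.
move=> cK cf [x0 Kx0].
have [c cK' Hc] := @EVT_min_rV RR r f K (ex_intro _ x0 Kx0) cK (continuous_subspaceT cf).
exists c; split; first by rewrite inE in cK'.
by move=> y Ky; apply: Hc; rewrite inE.
Qed.

Section Hmin.
Variable r : nat.
Variable cs : seq ('rV[RR]_r * RR).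
Local Notation K := (inK cs).

Definition cnt (x : 'rV[RR]_r) := count (fun c => dotv c.1 x == c.2) cs.

Lemma Hpoly_min g : compact K -> (exists x, K x) ->
  exists x, vertex K x /\ forall y, K y -> dotv g x <= dotv g y.
Proof.
move=> cK neK.
have [x0 [Kx0 Hx0]] := compact_min cK (@dotv_cont r g) neK.
pose Mn x := K x /\ forall y, K y -> dotv g x <= dotv g y.
pose P n := `[< exists x, Mn x /\ cnt x = n >].
have exP : exists n, P n by exists (cnt x0); apply/asboolP; exists x0.
have ubP : forall i, P i -> (i <= size cs)%N.
  by move=> i /asboolP [x [_ <-]]; rewrite /cnt count_size.
case: (ex_maxnP exP ubP) => n /asboolP [x [[Kx Mx] Ex]] Hmax.
exists x; split; last by [].
apply: ker_vertex => // d Hd.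
case: (eqVneq d 0) => // dn0; exfalso.
have [e [e0 He]] := step Kx Hd.
have a1 : `|e| <= e by rewrite ger0_norm // ltW.
have a2 : `|- e| <= e by rewrite normrN ger0_norm // ltW.
have gd0 : dotv g d = 0.
  have h1 := Mx _ (He e a1); have h2 := Mx _ (He (- e) a2).
  rewrite !dotvDr !dotvZr in h1 h2; nra.
have [c1 [Hc1 [In1 Nd1]]] : exists c, List.In c cs /\ dotv c.1 x != c.2 /\ dotv c.1 d != 0.
  case: (pselect (exists c, List.In c cs /\ dotv c.1 x != c.2 /\ dotv c.1 d != 0)) => // Hn.
  exfalso.
  have Hall : forall c, List.In c cs -> dotv c.1 d = 0.
    move=> c Hc; case: (eqVneq (dotv c.1 x) c.2) => E; first exact: Hd.
    by case: (eqVneq (dotv c.1 d) 0) => // N; exfalso; apply: Hn; exists c.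
  have Kline : forall t, K (x + t *: d).
    move=> t c Hc; rewrite dotvDr dotvZr (Hall c Hc) mulr0 addr0; exact: Kx.
  have [z [Kz Hz]] := compact_min cK (@dotv_cont r (- d)) neK.
  have dd : 0 < dotv d d.
    rewrite lt_def dotv_ge0 andbT; apply/eqP => E; move/eqP: dn0; apply; exact: dotv_eq0.
  pose t := (dotv d z - dotv d x + 1) / dotv d d.
  have := Hz _ (Kline t); rewrite !dotvNl dotvDr dotvZr /t mulfVK ?gt_eqF //.
  lra.
pose d' := if dotv c1.1 d < 0 then d else - d.
have Hd' : forall c, List.In c cs -> dotv c.1 x = c.2 -> dotv c.1 d' = 0.
  by move=> c Hc Ac; rewrite /d'; case: ifP => _; rewrite ?dotvNr (Hd c Hc Ac) ?oppr0.
have gd'0 : dotv g d' = 0 by rewrite /d'; case: ifP => _; rewrite ?dotvNr gd0 ?oppr0.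
have c1d' : dotv c1.1 d' < 0.
  rewrite /d'; case: ifP => // /negbT; rewrite -leNgt dotvNr => H.
  by rewrite oppr_lt0 lt_def Nd1 H.
pose S := [seq c <- cs | (dotv c.1 x != c.2) && (dotv c.1 d' < 0)].
pose f c := (dotv c.1 x - c.2) / (- dotv c.1 d').
have SnE : S <> [::].
  move=> E; have : List.In c1 S by apply/In_filter; split => //; rewrite In1 c1d'.
  by rewrite E.
have [cs' [Hcs' Hmin]] := list_argmin f SnE.
have [Hcs'1 /andP [In' Nd']] := proj1 (In_filter _ _ _) Hcs'.
pose t := f cs'.
have fpos : forall c, List.In c cs -> dotv c.1 x != c.2 -> dotv c.1 d' < 0 -> 0 < f c.
  move=> c Hc Ic Nc; apply: divr_gt0; last by rewrite oppr_gt0.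
  rewrite subr_gt0 lt_def; apply/andP; split; [exact: Ic|exact: Kx].
have t0 : 0 < t by apply: fpos.
pose y := x + t *: d'.
have Ky : K y.
  move=> c Hc; rewrite /y dotvDr dotvZr.
  case: (eqVneq (dotv c.1 x) c.2) => E.
    by rewrite (Hd' c Hc E) mulr0 addr0 E.
  case: (ltP (dotv c.1 d') 0) => Nc.
    have : t <= f c by apply: Hmin; apply/In_filter; split => //; rewrite E Nc.
    rewrite /f ler_pdivlMr ?oppr_gt0 // => H; nra.
  have := Kx c Hc; nra.
have My : Mn y.
  split => // z Kz; rewrite /y dotvDr dotvZr gd'0 mulr0 addr0; exact: Mx.
have : (cnt x < cnt y)%N.
  apply: count_lt.
    move=> c Hc /eqP Ac; rewrite /y dotvDr dotvZr (Hd' c Hc Ac) mulr0 addr0 Ac //.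
  exists cs'; split => //; split => //.
  rewrite /y dotvDr dotvZr /t /f; apply/eqP.
  have : dotv cs'.1 d' != 0 by rewrite lt_eqF.
  move=> nz; field; done.
have : (cnt y <= n)%N by apply: Hmax; apply/asboolP; exists y.
rewrite Ex => H1 H2; have := leq_trans H2 H1; by rewrite ltnn.
Qed.
End Hmin.

Definition spanning r (gs : seq 'rV[RR]_r) := forall y : 'rV[RR]_r,
  exists al : 'I_(size gs) -> RR, y = \sum_(i < size gs) al i *: nth 0 gs i.

Lemma span_or_hyper r (gs : seq 'rV[RR]_r) :
  spanning gs \/ exists h : 'rV[RR]_r, h != 0 /\ forall i : 'I_(size gs), dotv h (nth 0 gs i) = 0.
Proof.
pose G := \matrix_(i < size gs) nth 0 gs i.
case: (boolP (row_full G)) => HG.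
  left => y; have /submxP [D ->] := submx_full y HG.
  exists (fun i => D 0 i); rewrite mulmx_sum_row; apply: eq_bigr => i _.
  by rewrite rowK.
right.
have Hk : kermx G^T != 0.
  rewrite -mxrank_eq0 mxrank_ker mxrank_tr subn_eq0 -ltnNge.
  by rewrite ltn_neqAle rank_leq_col andbT.
have [i Hi] : exists i, row i (kermx G^T) != 0.
  case: (pselect (exists i, row i (kermx G^T) != 0)) => // Hn; exfalso.
  move/eqP: Hk; apply; apply/row_matrixP => i; rewrite row0.
  by case: (eqVneq (row i (kermx G^T)) 0) => // N; exfalso; apply: Hn; exists i.
exists (row i (kermx G^T)); split => // j.
have E : row i (kermx G^T) *m G^T = 0 by rewrite -row_mul mulmx_ker row0.
have := congr1 (fun M : 'M[RR]_(1, size gs) => M 0 j) E; rewrite !mxE => <-.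
rewrite /dotv; apply: eq_bigr => k _; rewrite !mxE; congr (_ * _).
Qed.

Lemma avoid_hyper r (hs : seq 'rV[RR]_r) : (forall h, List.In h hs -> h != 0) ->
  exists z, forall h, List.In h hs -> dotv h z != 0.
Proof.
elim: hs => [|h hs IH] H; first by exists 0.
have [z Hz] := IH (fun k Hk => H k (or_intror Hk)).
have hh : dotv h h != 0.
  apply/eqP => E; have := H h (or_introl erefl); rewrite (dotv_eq0 E) eqxx //.
have [t [t0 [_ Ht]]] := avoid_vals (map (fun k => - dotv k z / dotv k h) (h :: hs)) ltr01.
exists (z + t *: h) => k Hk.
rewrite dotvDr dotvZr.
have Bk : dotv k h != 0 -> dotv k z + t * dotv k h != 0.
  move=> nz; apply/eqP => E; apply: (Ht _ (In_map _ Hk)).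
  move/eqP: E; rewrite addr_eq0 => /eqP ->; field; done.
case: Hk => [E|Hk]; first by subst k; apply: Bk.
case: (eqVneq (dotv k h) 0) => E; last by apply: Bk.
by rewrite E mulr0 addr0; apply: Hz.
Qed.

Lemma cone_gen_lin r (gs : seq 'rV[RR]_r) (h : 'rV[RR]_r) y :
  (forall i : 'I_(size gs), dotv h (nth 0 gs i) = 0) -> cone_gen gs y -> dotv h y = 0.
Proof.
move=> Hh [lam [_ ->]]; rewrite dotvC dotv_suml big1 // => i _.
by rewrite dotvC dotvZr Hh mulr0.
Qed.

Lemma fat_upper r (phi : 'rV[RR]_r -> RR) (gs : seq 'rV[RR]_r) (l : 'rV[RR]_r) :
  (forall x y, phi x + phi y <= phi (x + y)) ->
  (forall t x, 0 <= t -> phi (t *: x) = t * phi x) ->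
  (forall x, cone_gen gs x -> phi x = dotv l x) ->
  spanning gs -> forall y, phi y <= dotv l y.
Proof.
move=> Hsup Hhom Hlin Hsp y.
have [al Hy] := Hsp y.
pose z := \sum_(i < size gs) nth 0 gs i.
pose lm := \sum_(i < size gs) `|al i|.
have lm0 : 0 <= lm by apply: sumr_ge0 => i _.
have Cz : cone_gen gs z.
  exists (fun _ => 1); split; first by move=> i; exact: ler01.
  by rewrite /z; apply: eq_bigr => i _; rewrite scale1r.
have Cyz : cone_gen gs (lm *: z + y).
  exists (fun i => lm + al i); split.
    move=> i; have : `|al i| <= lm.
      rewrite /lm (bigD1 i) //=; rewrite lerDl; apply: sumr_ge0 => j _ //.
    have := ler_norm (- al i); rewrite normrN; lra.
  rewrite Hy /z scaler_sumr -big_split /=; apply: eq_bigr => i _.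
  by rewrite scalerDl.
have := Hsup (lm *: z) y; rewrite (Hlin _ Cyz) Hhom // (Hlin _ Cz) dotvDr dotvZr.
lra.
Qed.

Lemma minrep r (phi : 'rV[RR]_r -> RR) (Cs : seq (seq 'rV[RR]_r * 'rV[RR]_r)) :
  (forall x y, phi x + phi y <= phi (x + y)) ->
  (forall t x, 0 <= t -> phi (t *: x) = t * phi x) ->
  (forall x, exists q, List.In q Cs /\ cone_gen q.1 x) ->
  (forall q x, List.In q Cs -> cone_gen q.1 x -> phi x = dotv q.2 x) ->
  exists L : seq 'rV[RR]_r, (forall l, List.In l L -> forall y, phi y <= dotv l y) /\
    (forall x, exists l, List.In l L /\ dotv l x = phi x).
Proof.
move=> Hsup Hhom Hcov Hlin.
pose Fat := [seq q <- Cs | `[< spanning q.1 >]].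
pose Thin := [seq q <- Cs | ~~ `[< spanning q.1 >]].
have Hfat : forall q, List.In q Fat -> forall y, phi y <= dotv q.2 y.
  move=> q /In_filter [Hq /asboolP Hs] y.
  apply: (fat_upper Hsup Hhom _ Hs) => x Hx; exact: Hlin.
exists (map snd Fat); split.
  by move=> l /In_map_iff [q [<- Hq]]; apply: Hfat.
move=> x.
case: (pselect (exists l, List.In l (map snd Fat) /\ dotv l x = phi x)) => // Hn.
exfalso.
have Hgt : forall q, List.In q Fat -> phi x < dotv q.2 x.
  move=> q Hq; rewrite lt_def Hfat // andbT; apply/eqP => E; apply: Hn.
  by exists q.2; split => //; apply: In_map.
have [Hs [HsT HsH]] := @list_choice _ _ Thin (fun q h => h != 0 /\
    forall y, cone_gen q.1 y -> dotv h y = 0)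
  (fun q Hq => match span_or_hyper q.1 with
     | or_introl Hsp => False_ind _ (let: conj _ Hb := proj1 (In_filter _ _ _) Hq in
          (elimN (asboolP _) Hb) Hsp)
     | or_intror (ex_intro h (conj hn hh)) =>
          ex_intro _ h (conj hn (fun y Hy => cone_gen_lin hh Hy)) end).
have [z Hz] := @avoid_hyper r Hs (fun h Hh => let: ex_intro q (conj _ (conj hn _)) := HsH h Hh in hn).
pose M := `|phi (- z)|.
have Hpos : forall v, List.In v (map (fun q => (dotv q.2 x - phi x) / (`|dotv q.2 z| + M + 1)) Fat) -> 0 < v.
  move=> v /In_map_iff [q [<- Hq]]; apply: divr_gt0.
    by rewrite subr_gt0; apply: Hgt.
  have : 0 <= M by exact: normr_ge0. have : 0 <= `|dotv q.2 z| by exact: normr_ge0. lra.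
have [e [e0 He]] := posmin Hpos.
have [t [t0 [te Ht]]] := avoid_vals (map (fun h => - dotv h x / dotv h z) Hs) e0.
have [q [Hq Cq]] := Hcov (x + t *: z).
case: (boolP `[< spanning q.1 >]) => Hsp.
  have HqF : List.In q Fat by apply/In_filter.
  have E1 := Hlin q _ Hq Cq.
  have E2 := Hsup (x + t *: z) (t *: (- z)).
  rewrite Hhom in E2; last exact: ltW.
  rewrite -addrA -scalerDr subrr scaler0 addr0 E1 dotvDr dotvZr in E2.

  have := He _ (In_map (fun q => (dotv q.2 x - phi x) / (`|dotv q.2 z| + M + 1)) HqF).
  rewrite ler_pdivlMr; last first.
    have : 0 <= M by exact: normr_ge0. have : 0 <= `|dotv q.2 z| by exact: normr_ge0. lra.
  move=> H3.
  have H4 := ler_norm (- dotv q.2 z); rewrite normrN in H4.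
  have H5 := ler_norm (- phi (- z)); rewrite normrN in H5.
  rewrite -/M in H5.
  have N0 : 0 <= `|dotv q.2 z| by exact: normr_ge0.
  have M0 : 0 <= M by exact: normr_ge0.
  have P4 : t * (- dotv q.2 z) <= t * `|dotv q.2 z| by apply: ler_wpM2l; [exact: ltW|].
  have P5 : t * (- phi (- z)) <= t * M by apply: ler_wpM2l; [exact: ltW|].
  have P6 : t * (`|dotv q.2 z| + M + 1) < e * (`|dotv q.2 z| + M + 1).
    by rewrite ltr_pM2r //; lra.
  lra.
have HqT : List.In q Thin by apply/In_filter.
have [h [Hh [hn hc]]] := HsT q HqT.
have := hc _ Cq; rewrite dotvDr dotvZr => /eqP; rewrite addr_eq0 => /eqP E.
apply: (Ht _ (In_map _ Hh)).
have := Hz h Hh => nz.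
rewrite E; field; exact: nz.
Qed.

Lemma In_cat (T : Type) (x : T) (s1 s2 : seq T) :
  List.In x (s1 ++ s2) <-> List.In x s1 \/ List.In x s2.
Proof.
elim: s1 => [|a s1 IH] /=; first by split => [H|[[]|//]]; right.
split.
  by move=> [<-|/IH [H|H]]; [left; left|left; right|right].
by move=> [[<-|H]|H]; [left|right; apply/IH; left|right; apply/IH; right].
Qed.

Lemma In_flatten (T : Type) (x : T) (ss : seq (seq T)) :
  List.In x (flatten ss) <-> exists s, List.In s ss /\ List.In x s.
Proof.
elim: ss => [|s ss IH] /=; first by split => // [[s []]].
rewrite In_cat; split.
  by move=> [H|/IH [s' [H1 H2]]]; [exists s; split => //; left|exists s'; split => //; right].
by move=> [s' [[<-|H1] H2]]; [left|right; apply/IH; exists s'].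
Qed.

Lemma max_above (T : Type) (R : T -> T -> Prop) :
  (forall x y z, R x y -> R y z -> R x z) -> (forall x, R x x) ->
  forall (L : seq T) x, exists y, (y = x \/ List.In y L) /\ R x y /\
    forall z, List.In z L -> R y z -> R z y.
Proof.
move=> Rt Rr; elim=> [|a L IH] x.
  by exists x; split; [left|split => // z []].
have [y [Hy [Rxy Hmax]]] := IH x.
case: (pselect (R y a)) => Rya.
  have [y' [Hy' [Ray' Hmax']]] := IH a.
  exists y'; split.
    by case: Hy' => [->|H]; right; [left|right].
  split; first exact: Rt Rxy (Rt _ _ _ Rya Ray').
  by move=> z [<-|Hz] //; apply: Hmax'.
exists y; split.
  by case: Hy => [->|H]; [left|right; right].
split => //.
by move=> z [<-|Hz] H //; apply: Hmax.
Qed.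

Section Poly.
Variables (F : set RR) (I : Type) (r : nat) (mu : I -> I -> 'rV[RR]_r -> 'rV[RR]_r).
Hypothesis Hmu : polyptych F mu.

Lemma mu_id a x : mu a a x = x.
Proof. by case: Hmu => _ [_ [H _]]. Qed.
Lemma mu_coc a b c x : mu b c (mu a b x) = mu a c x.
Proof. by case: Hmu => _ [_ [_ [_ H]]]. Qed.

Lemma piinv_isMR a x : isMR mu (piinv mu a x).
Proof. by move=> b c; rewrite /piinv mu_coc. Qed.
Lemma isMR_piinv m a : isMR mu m -> piinv mu a (m a) = m.
Proof. by move=> Hm; apply: funext => b; rewrite /piinv -Hm. Qed.
Lemma piinv_at a x : piinv mu a x a = x.
Proof. by rewrite /piinv mu_id. Qed.
Lemma piinv_change a b x : piinv mu a x = piinv mu b (mu a b x).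
Proof. by apply: funext => c; rewrite /piinv mu_coc. Qed.

Lemma in_maxcone S m : coarsest_fan F mu S -> isMR mu m ->
  exists C, maxcone mu S C /\ C m.
Proof.
move=> [[Hcf _] _] Hm.
case: Hmu => [[a]] _.
have [_ Hcov] := Hcf a.
have [C0 [HC0 C0m]] := Hcov (m a).
have [C [EC HC]] := proj1 (In_map_iff _ _ _) HC0.
subst C0; rewrite /= isMR_piinv // in C0m.
have Rt : forall A B D, subM mu A B -> subM mu B D -> subM mu A D.
  by move=> A B D H1 H2 x Hx Ax; apply: H2 => //; apply: H1.
have [y [Hy [RCy Hmax]]] := max_above Rt (fun A x _ Ax => Ax) S C.
exists y; split; last exact: RCy.
split => //; by case: Hy => [->|].
Qed.

Lemma SpR_sup p a x y : SpR mu p ->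
  p (piinv mu a x) + p (piinv mu a y) <= p (piinv mu a (x + y)).
Proof.
move=> [H _]; have [H1 _] := H _ _ (piinv_isMR a x) (piinv_isMR a y).
by have := H1 a; rewrite /addc !piinv_at.
Qed.
Lemma SpR_hom p a t x : SpR mu p -> 0 <= t ->
  p (piinv mu a (t *: x)) = t * p (piinv mu a x).
Proof.
move=> [_ H] t0; have := H a t (piinv mu a x) t0 (piinv_isMR a x).
by rewrite /smulc piinv_at.
Qed.

Lemma chart_minrep p a b u : SpR mu p ->
  (forall y, p (piinv mu b y) = dotv u y) ->
  exists L : seq 'rV[RR]_r,
    (forall l, List.In l L -> forall y, p (piinv mu a y) <= dotv l y) /\
    (forall x, exists l, List.In l L /\ dotv l x = p (piinv mu a x)).
Proof.
move=> Hp Hb.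
have Hphi : forall x, p (piinv mu a x) = dotv u (mu a b x).
  by move=> x; rewrite (piinv_change a b) Hb.
case: Hmu => _ [Hpwl _].
have [_ [L [[[Hrc _] HLcov] HLlin]]] := Hpwl a b.
have HQ : forall C, List.In C L -> exists q : seq 'rV[RR]_r * 'rV[RR]_r,
    (forall x, C x <-> cone_gen q.1 x) /\ (forall x, C x -> p (piinv mu a x) = dotv q.2 x).
  move=> C HC.
  have [gs [_ Hgs]] := Hrc C HC. have [A [_ HA]] := HLlin C HC.
  exists (gs, u *m A^T); split; first exact: Hgs.
  by move=> x Cx; rewrite Hphi HA // dotv_mul.
have [Cs [HCs1 HCs2]] := list_choice HQ.
apply: (@minrep r _ Cs).
- by move=> x y; apply: SpR_sup.
- by move=> t x t0; apply: SpR_hom.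
- move=> x; have [C [HC Cx]] := HLcov x.
  have [q [Hq [HQ1 _]]] := HCs1 C HC.
  by exists q; split => //; apply: (proj1 (HQ1 x)).
- move=> q x Hq Cx; have [C [HC [HQ1 HQ2]]] := HCs2 q Hq.
  by apply: HQ2; apply: (proj2 (HQ1 x)).
Qed.
End Poly.

Lemma inf_is_min (S : set RR) y : is_min S y -> inf S = y.
Proof.
move=> [Sy Hy]; apply/eqP; rewrite eq_le; apply/andP; split.
  by apply: ge_inf => //; exists y => z Sz; apply: Hy.
by apply: lb_le_inf; [exists y|move=> z Sz; apply: Hy].
Qed.

Theorem mainTheorem12 (F : set RR) (I : finType) (J : Type) (r s : nat)
    (mu : I -> I -> 'rV[RR]_r -> 'rV[RR]_r) (nu : J -> J -> 'rV[RR]_s -> 'rV[RR]_s)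
    (v : (I -> 'rV[RR]_r) -> (J -> 'rV[RR]_s) -> RR)
    (w : (J -> 'rV[RR]_s) -> (I -> 'rV[RR]_r) -> RR)
    (P : set (I -> 'rV[RR]_r)) :
  subringR F -> polyptych F mu -> polyptych F nu ->
  strict_dual_pair F mu nu v w -> PLpolytope F mu P ->
  (exists Vs : seq (I -> 'rV[RR]_r), forall m, Vert mu P m <-> List.In m Vs) /\
  ((exists m, P m) ->
     (forall n, isMR nu n ->
        is_min [set v u n | u in P] (psiP v P n) /\
        is_min [set v u n | u in Vert mu P] (psiP v P n)) /\
     (forall g : J, continuous (fun x : 'rV[RR]_s => psiP v P (piinv nu g x))) /\
     (exists h, inPN nu h /\ forall n, isMR nu n -> psiP v P n = h n)).
Proof.
move=> _ Hmu Hnu Hd HP.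
case: Hd => HvSp [HwSp [Hv1 [Hw1 [Hvw [Hvinj [Hvsurj [Hwinj [Hwsurj
  [[SM [HSM [HSM1 HSM2]]] [SN [HSN [HSN1 HSN2]]]]]]]]]]]].
case: HP => [[l [p [c [Hp [Hc HPm]]]]] Hcomp].
have PisMR : forall m, P m -> isMR mu m by move=> m /HPm [].
have w_lin : forall n, isMR nu n -> exists a u, forall x, w n (piinv mu a x) = dotv u x.
  move=> n Hn; have [C [HC Cn]] := in_maxcone Hnu HSN Hn.
  have [a [H1 _]] := HSN2 C HC; have [_ [u Hu]] := H1 n Hn Cn.
  by exists a, u.
have v_lin : forall m, isMR mu m -> exists g u, forall y, v m (piinv nu g y) = dotv u y.
  move=> m Hm; have [C [HC Cm]] := in_maxcone Hmu HSM Hm.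
  have [g [H1 _]] := HSM2 C HC; have [_ [u Hu]] := H1 m Hm Cm.
  by exists g, u.
have pt_lin : forall q, Sp F mu q -> exists b u, forall y, q (piinv mu b y) = dotv u y.
  move=> q Hq; have [n [[Hn _] Hwn]] := Hwsurj q Hq.
  have [b [u Hu]] := w_lin n Hn.
  by exists b, u => y; rewrite -Hwn; [exact: Hu|exact: (piinv_isMR Hmu)].
have hrep : forall a, exists cs, forall x, P (piinv mu a x) <-> inK cs x.
  move=> a.
  have HQ : forall i : 'I_l, List.In i (enum 'I_l) -> exists csi : seq ('rV[RR]_r * RR),
      forall y, c i <= p i (piinv mu a y) <-> (forall cc, List.In cc csi -> cc.2 <= dotv cc.1 y).
    move=> i _; have [b [u Hu]] := pt_lin _ (Hp i).
    have [L [HL1 HL2]] := chart_minrep Hmu a (proj1 (Hp i)) Hu.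
    exists (map (fun l0 => (l0, c i)) L) => y; split.
      move=> H cc /In_map_iff [l0 [<- Hl0]] /=.
      exact: le_trans H (HL1 _ Hl0 y).
    move=> H; have [l0 [Hl0 E]] := HL2 y; rewrite -E.
    exact: (H (l0, c i) (In_map _ Hl0)).
  have [Qs [H1 H2]] := list_choice HQ.
  exists (flatten Qs) => x; split.
    move=> /HPm [_ Hx] cc /In_flatten [sq [Hsq Hcc]].
    have [i [_ Hi]] := H2 sq Hsq.
    exact: (proj1 (Hi x) (Hx i) cc Hcc).
  move=> Hx; apply/HPm; split; first exact: (piinv_isMR Hmu).
  move=> i; have [sq [Hsq Hi]] := H1 i (proj2 (In_mem _ _) (mem_enum _ i)).
  apply/(Hi x) => cc Hcc; apply: Hx; apply/In_flatten; by exists sq.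
have Keq : forall a cs, (forall x, P (piinv mu a x) <-> inK cs x) ->
    [set x | P (piinv mu a x)] = inK cs.
  by move=> a cs H; apply/funext => x; apply/propext; exact: H.
have [Vs HVs] : exists Vs : seq (I -> 'rV[RR]_r), forall m, Vert mu P m <-> List.In m Vs.
  have HQ : forall a, List.In a (enum I) -> exists Vl : seq (I -> 'rV[RR]_r),
      forall m, (P m /\ vertex [set x | P (piinv mu a x)] (m a)) <-> List.In m Vl.
    move=> a _; have [cs Hcs] := hrep a; rewrite (Keq a cs Hcs).
    have [l0 Hl0] := Hpoly_finite cs.
    exists (map (piinv mu a) l0) => m; split.
      move=> [Pm Vm]; rewrite -(isMR_piinv a (PisMR m Pm)); apply: In_map.
      exact/Hl0.
    move=> /In_map_iff [x [<- Hx]]; have Vx := proj2 (Hl0 x) Hx.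
    rewrite (piinv_at Hmu); split => //; apply/Hcs; exact: Vx.1.
  have [Qs [H1 H2]] := list_choice HQ.
  exists (flatten Qs) => m; split.
    move=> [Pm [a Va]]; have [Vl [HVl HQa]] := H1 a (proj2 (In_mem _ _) (mem_enum _ a)).
    by apply/In_flatten; exists Vl; split => //; apply/HQa.
  move=> /In_flatten [Vl [HVl Hm]]; have [a [_ HQa]] := H2 Vl HVl.
  have [Pm Va] := proj2 (HQa m) Hm; split => //; by exists a.
split; first by exists Vs.
move=> [m0 Pm0].
have minv : forall n, isMR nu n -> exists s0, Vert mu P s0 /\ forall m, P m -> v s0 n <= v m n.
  move=> n Hn; have [a0 [u Hu]] := w_lin n Hn.
  have [cs Hcs] := hrep a0.
  have neK : exists x, inK cs x.
    exists (m0 a0); apply/Hcs; rewrite isMR_piinv //; exact: PisMR.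
  have cK : compact (inK cs) by rewrite -(Keq a0 cs Hcs); exact: Hcomp.
  have [x [Vx Hx]] := Hpoly_min u cK neK.
  exists (piinv mu a0 x); split.
    split; first by apply/Hcs; exact: Vx.1.
    by exists a0; rewrite (piinv_at Hmu) (Keq a0 cs Hcs).
  move=> m Pm; rewrite (Hvw _ _ (piinv_isMR Hmu a0 x) Hn) (Hvw _ _ (PisMR m Pm) Hn).
  rewrite -(isMR_piinv a0 (PisMR m Pm)) !Hu; apply: Hx; apply/Hcs.
  by rewrite isMR_piinv //; exact: PisMR.
have psi_eq : forall n, isMR nu n -> exists s0, Vert mu P s0 /\ psiP v P n = v s0 n /\
    forall m, P m -> v s0 n <= v m n.
  move=> n Hn; have [s0 [Vs0 Hs0]] := minv n Hn.
  exists s0; split => //; split => //.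
  apply: inf_is_min; split; first by exists s0 => //; exact: Vs0.1.
  by move=> z [m Pm <-]; apply: Hs0.
split.
  move=> n Hn; have [s0 [Vs0 [Epsi Hs0]]] := psi_eq n Hn; rewrite Epsi; split.
    split; first by exists s0 => //; exact: Vs0.1.
    by move=> z [m Pm <-]; apply: Hs0.
  split; first by exists s0.
  by move=> z [m [Pm _] <-]; apply: Hs0.
have [g0] : inhabited J by case: Hnu.
have [s1 [Vs1 _]] := minv (piinv nu g0 0) (piinv_isMR Hnu g0 0).
have Hin1 := proj1 (HVs s1) Vs1.
case E: Vs => [|s0 Vs']; first by rewrite E in Hin1.
pose mnf := fun ls : seq (I -> 'rV[RR]_r) =>
  foldr (fun t acc (n : J -> 'rV[RR]_s) => Num.min (v t n) (acc n)) (v s0) ls.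
have mn1 : forall ls n t, List.In t (s0 :: ls) -> mnf ls n <= v t n.
  elim=> [|a ls IH] n t Ht.
    by case: Ht => [<-|[]]; exact: lexx.
  rewrite /= ge_min; apply/orP.
  case: Ht => [<-|[<-|Ht]].
  - by right; apply: IH; left.
  - by left.
  - by right; apply: IH; right.
have mn2 : forall ls n, exists t, List.In t (s0 :: ls) /\ mnf ls n = v t n.
  elim=> [|a ls IH] n; first by exists s0; split => //; left.
  have [t [Ht Et]] := IH n.
  case: (leP (v a n) (mnf ls n)) => H.
    by exists a; split; [right; left|rewrite /= min_l].
  exists t; split; first by case: Ht => [<-|Ht]; [left|right; right].
  rewrite /= min_r; [exact: Et|exact: ltW].
have VsP : forall t, List.In t (s0 :: Vs') -> P t by move=> t; rewrite -E => /HVs [].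
have psi_mn : forall n, isMR nu n -> psiP v P n = mnf Vs' n.
  move=> n Hn; have [s2 [Vs2 [Ep Hs2]]] := psi_eq n Hn; rewrite Ep.
  apply/eqP; rewrite eq_le; apply/andP; split.
    have [t [Ht Et]] := mn2 Vs' n; rewrite Et; apply: Hs2; exact: VsP.
  by apply: mn1; rewrite -E; exact/HVs.
split.
  move=> g.
  have -> : (fun x => psiP v P (piinv nu g x)) = (fun x => mnf Vs' (piinv nu g x)).
    by apply/funext => x; apply: psi_mn; exact: (piinv_isMR Hnu).
  have cont_v : forall t, List.In t (s0 :: Vs') -> continuous (fun x => v t (piinv nu g x)).
    move=> t Ht; have [gam [u Hu]] := v_lin t (PisMR t (VsP t Ht)).
    have -> : (fun x => v t (piinv nu g x)) = (fun x => dotv u (nu g gam x)).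
      by apply/funext => x; rewrite (piinv_change Hnu g gam) Hu.
    move=> x; case: Hnu => _ [Hpwl _]; have [Hcn _] := Hpwl g gam.
    exact: (continuous_comp (Hcn x) (@dotv_cont s u (nu g gam x))).
  have Hgen : forall ls, (forall t, List.In t (s0 :: ls) -> continuous (fun x => v t (piinv nu g x))) ->
      continuous (fun x => mnf ls (piinv nu g x)).
    elim=> [|a ls IH] H; first by apply: H; left.
    move=> x.
    have Ha := H a (or_intror (or_introl erefl)).
    have Hl : continuous (fun x => mnf ls (piinv nu g x)).
      by apply: IH => t [<-|Ht]; apply: H; [left|right; right].
    exact: (@continuous_min RR _ (fun x => v a (piinv nu g x)) (fun x => mnf ls (piinv nu g x)) x (Ha x) (Hl x)).
  exact: Hgen.
exists (mnf Vs'); split; last exact: psi_mn.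
have Hgen : forall ls, (forall t, List.In t (s0 :: ls) -> SpR nu (v t)) -> inPN nu (mnf ls).
  elim=> [|a ls IH] H; first by apply: PN_pt; apply: H; left.
  apply: PN_min; first by apply: PN_pt; apply: H; right; left.
  by apply: IH => t [<-|Ht]; apply: H; [left|right; right].
apply: Hgen => t Ht; apply: HvSp; apply: PisMR; exact: VsP.
Qed.
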